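(* Let $k\geq 1$ and $K=J(2k+1,4)$, with Riley polynomial $\phi_K(x,y)=\lambda_k(x,y)\,\alpha_k(x,y)-1$ for the presentation $\langle a,b\mid w^2a=bw^2\rangle$, $w=(ba^{-1})^kba(b^{-1}a)^k$. Then for every $n\geq 5$, the polynomial $\phi_K(2\cos(\pi/n),y)$ has a real root $y_n>2$.
   Context: $S_n$ are the Chebyshev polynomials $S_0=1$, $S_1=z$, $S_{n+1}=zS_n-S_{n-1}$. $\lambda_k(x,y)=x^2-y-(y-2)(y+2-x^2)S_k(y)S_{k-1}(y)$ and $\alpha_k(x,y)=1+(y+2-x^2)S_{k-1}(y)\big(S_k(y)-S_{k-1}(y)\big)$. *)

(* Defs.v *)
From Stdlib Require Import Reals.
Open Scope R_scope.

Fixpoint chebS (n : nat) (z : R) : R :=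
  match n with
  | O => 1
  | S O => z
  | S ((S m) as p) => z * chebS p z - chebS m z
  end.

Definition lambdaK (k : nat) (x y : R) : R :=
  x ^ 2 - y - (y - 2) * (y + 2 - x ^ 2) * chebS k y * chebS (k - 1) y.

Definition alphaK (k : nat) (x y : R) : R :=
  1 + (y + 2 - x ^ 2) * chebS (k - 1) y * (chebS k y - chebS (k - 1) y).

Definition rileyJ (k : nat) (x y : R) : R :=
  lambdaK k x y * alphaK k x y - 1.

(* Main.v *)
Require Import Defs.
From Stdlib Require Import Reals Lra Lia.
Open Scope R_scope.

Ltac cosnum H :=
  unfold cos_approx in H; cbn [sum_f_R0 Nat.mul Nat.add] in H; unfold cos_term in H;
  rewrite !INR_IZR_INZ in H;
  repeat match type of H with context [Z.of_nat ?t] =>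
    let v := eval vm_compute in (Z.of_nat t) in change (Z.of_nat t) with v in H end;
  simpl pow in H.

Lemma PI_lt : PI < 16/5.
Proof.
  destruct (Rlt_or_le PI (16/5)) as [h|h]; auto.
  assert (c0 : 0 <= cos (8/5)) by (apply cos_ge_0; lra).
  destruct (pre_cos_bound (8/5) 1) as [_ hu]; try lra.
  cosnum hu. lra.
Qed.

Lemma cos_lb64 : 4/5 <= cos (16/25).
Proof.
  destruct (pre_cos_bound (16/25) 1) as [hl _]; try lra.
  cosnum hl. lra.
Qed.

Lemma cheb_SS m z : chebS (S (S m)) z = z * chebS (S m) z - chebS m z.
Proof. reflexivity. Qed.

Lemma cheb_cont n : continuity (chebS n) /\ continuity (chebS (S n)).
Proof.
  induction n as [|n [IH1 IH2]].
  - split; simpl. apply continuity_const; intros ? ?; reflexivity. apply derivable_continuous, derivable_id.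
  - split; auto.
    assert (E : chebS (S (S n)) = fun z => z * chebS (S n) z - chebS n z)
      by reflexivity.
    rewrite E. apply continuity_minus; auto.
    apply continuity_mult; auto. apply derivable_continuous, derivable_id.
Qed.

Lemma cheb_mono n y : 2 <= y -> 1 <= chebS n y /\ chebS n y <= chebS (S n) y.
Proof.
  intro hy. induction n as [|n [IH1 IH2]].
  - simpl. lra.
  - split; [lra|]. rewrite cheb_SS. nra.
Qed.

Lemma cheb_two n : chebS n 2 = INR n + 1 /\ chebS (S n) 2 = INR n + 2.
Proof.
  induction n as [|n [IH1 IH2]].
  - simpl. lra.
  - split. rewrite S_INR; lra. rewrite cheb_SS, IH1, IH2, S_INR. lra.
Qed.

Theorem proposition5p2 (k n : nat) (hk : (1 <= k)%nat) (hn : (5 <= n)%nat) :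
  exists y : R, 2 < y /\ rileyJ k (2 * cos (PI / INR n)) y = 0.
Proof.
  set (x := 2 * cos (PI / INR n)).
  assert (hn5 : 5 <= INR n) by (replace 5 with (INR 5) by (simpl; lra); apply le_INR; lia).
  assert (hPI := PI_lt). assert (hP0 := PI2_1).
  assert (ht1 : 0 < PI / INR n) by (apply Rdiv_lt_0_compat; lra).
  assert (ht2 : PI / INR n <= PI / 5).
  { unfold Rdiv. apply Rmult_le_compat_l; [lra|]. apply Rinv_le_contravar; lra. }
  assert (hc1 : cos (PI / INR n) < 1).
  { rewrite <- cos_0. apply cos_decreasing_1; lra. }
  assert (hc2 : 4/5 <= cos (PI / INR n)).
  { eapply Rle_trans; [apply cos_lb64|]. apply cos_decr_1; lra. }
  assert (hx1 : 64/25 <= x ^ 2).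
  { unfold x. set (c := cos (PI / INR n)) in *. simpl. nra. }
  assert (hx2 : x ^ 2 < 4).
  { unfold x. set (c := cos (PI / INR n)) in *. simpl. nra. }
  clearbody x.
  destruct k as [|j]; [lia|].
  replace (S j - 1)%nat with j by lia.
  set (f := fun y => - rileyJ (S j) x y).
  assert (fc : continuity f).
  { unfold f, rileyJ, lambdaK, alphaK. replace (S j - 1)%nat with j by lia.
    destruct (cheb_cont j) as [c1 c2].
    apply continuity_opp. apply continuity_minus; [|apply continuity_const; intros ? ?; reflexivity].
    repeat first [ apply continuity_mult | apply continuity_minus | apply continuity_plus
                 | apply continuity_const; intros ? ?; reflexivity
                 | apply derivable_continuous, derivable_id | assumption ]. }
  assert (f2 : f 2 < 0).
  { unfold f, rileyJ, lambdaK, alphaK. replace (S j - 1)%nat with j by lia.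
    destruct (cheb_two j) as [e1 e2]. rewrite e1, e2.
    assert (0 <= INR j) by apply pos_INR.
    assert (0 <= (2 - (x^2-2)) * INR j * (x^2 - 2)) by (apply Rmult_le_pos; [apply Rmult_le_pos|]; lra).
    nra. }
  assert (f4 : 0 < f 4).
  { unfold f, rileyJ, lambdaK, alphaK. replace (S j - 1)%nat with j by lia.
    destruct (cheb_mono j 4) as [m1 m2]; [lra|].
    assert (0 <= (4 - 2) * (4 + 2 - x ^ 2) * chebS (S j) 4 * chebS j 4)
      by (repeat apply Rmult_le_pos; lra).
    assert (0 <= (4 + 2 - x ^ 2) * chebS j 4 * (chebS (S j) 4 - chebS j 4))
      by (repeat apply Rmult_le_pos; lra).
    nra. }
  destruct (IVT f 2 4 fc ltac:(lra) f2 f4) as [z [[hz1 hz2] hz]].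
  exists z. split.
  - destruct (Req_dec z 2) as [e|e]; [subst z; lra | lra].
  - unfold f in hz. lra.
Qed.
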